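(* In the setting described in the context, let $d\in\mathcal{B}_2$ be a metric on $A$. Then the function $$\sigma(x,y)=d(x,\cdot)+d(y,\cdot)-d(x,y)-d(\cdot,\cdot)+m$$ is a $\Sigma_m$-proximity on $A$.
   Context: $A$ is a nonempty set (possibly infinite); $m\in\mathbb{R}$. A metric on $A$ is a function $d:A^2\to\mathbb{R}$ such that for all $x,y,z\in A$: $d(x,y)=0$ iff $x=y$, and $d(x,y)+d(x,z)-d(y,z)\ge0$ (metrics are symmetric). $\mathcal{B}_1$ is a set of functions $A\to\mathbb{R}$ forming a real linear space containing all constant functions, and $\mu:\mathcal{B}_1\to\mathbb{R}$ is a linear functional with $\mu(c)=c$ for every constant function $c$ and monotone: if $f,g\in\mathcal{B}_1$ and $f\ge g$ pointwise, then $\mu(f)\ge\mu(g)$. For $f:A^2\to\mathbb{R}$ such that $y\mapsto f(x,y)$ lies in $\mathcal{B}_1$ for every $x$, write $f(x,\cdot)=\mu(y\mapsto f(x,y))$, a function of $x$. $\mathcal{B}_2$ is a set of functions $A^2\to\mathbb{R}$ forming a real linear space that contains all constant functions and all functions $(x,y)\mapsto h(x)$ and $(x,y)\mapsto h(y)$ with $h\in\mathcal{B}_1$, and such that for every $f\in\mathcal{B}_2$: $y\mapsto f(x,y)\in\mathcal{B}_1$ for every $x$, $x\mapsto f(x,\cdot)\in\mathcal{B}_1$, and $x\mapsto f(x,x)\in\mathcal{B}_1$. For a symmetric $d\in\mathcal{B}_2$, $d(\cdot,\cdot)=\mu(x\mapsto d(x,\cdot))$ (a real number). A function $\sigma\in\mathcal{B}_2$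 is a $\Sigma_m$-proximity on $A$ if for all $x,y,z\in A$: (1) $\sigma(x,\cdot)=m$; (2) $\sigma(x,y)+\sigma(x,z)-\sigma(y,z)\le\sigma(x,x)$, with strict inequality whenever $z=y$ and $x\ne y$. *)

(* Defs.v *)
From Stdlib Require Import Reals.
Open Scope R_scope.

Definition linear_space1 {A : Type} (B1 : (A -> R) -> Prop) : Prop :=
  (forall f g a b, B1 f -> B1 g -> B1 (fun x => a * f x + b * g x)) /\
  (forall c : R, B1 (fun _ => c)).

Definition mean_functional {A : Type} (B1 : (A -> R) -> Prop) (mu : (A -> R) -> R) : Prop :=
  (forall f g a b, B1 f -> B1 g ->
      mu (fun x => a * f x + b * g x) = a * mu f + b * mu g) /\
  (forall c : R, mu (fun _ => c) = c) /\
  (forall f g, B1 f -> B1 g -> (forall x, g x <= f x) -> mu g <= mu f).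

(* f(x,.) = mu (y |-> f(x,y)), a function of x *)
Definition row {A : Type} (mu : (A -> R) -> R) (f : A -> A -> R) : A -> R :=
  fun x => mu (fun y => f x y).

(* d(.,.) = mu (x |-> d(x,.)) *)
Definition total {A : Type} (mu : (A -> R) -> R) (f : A -> A -> R) : R :=
  mu (row mu f).

Definition space2 {A : Type} (B1 : (A -> R) -> Prop) (mu : (A -> R) -> R)
  (B2 : (A -> A -> R) -> Prop) : Prop :=
  (forall f g a b, B2 f -> B2 g -> B2 (fun x y => a * f x y + b * g x y)) /\
  (forall c : R, B2 (fun _ _ => c)) /\
  (forall h, B1 h -> B2 (fun x _ => h x)) /\
  (forall h, B1 h -> B2 (fun _ y => h y)) /\
  (forall f, B2 f ->
     (forall x, B1 (fun y => f x y)) /\ B1 (row mu f) /\ B1 (fun x => f x x)).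

Definition is_metric {A : Type} (d : A -> A -> R) : Prop :=
  (forall x y, d x y = 0 <-> x = y) /\
  (forall x y, d x y = d y x) /\
  (forall x y z, d x y + d x z - d y z >= 0).

Definition sigma_proximity {A : Type} (B2 : (A -> A -> R) -> Prop)
  (mu : (A -> R) -> R) (m : R) (s : A -> A -> R) : Prop :=
  B2 s /\
  (forall x, row mu s x = m) /\
  (forall x y z, s x y + s x z - s y z <= s x x) /\
  (forall x y, x <> y -> s x y + s x y - s y y < s x x).

(* Main.v *)
Require Import Defs.
From Stdlib Require Import Reals Lra FunctionalExtensionality.
Open Scope R_scope.

Theorem proposition2 (A : Type) (a0 : A) (m : R)
  (B1 : (A -> R) -> Prop) (mu : (A -> R) -> R) (B2 : (A -> A -> R) -> Prop)
  (HB1 : linear_space1 B1) (Hmu : mean_functional B1 mu)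
  (HB2 : space2 B1 mu B2)
  (d : A -> A -> R) (HdB2 : B2 d) (Hd : is_metric d) :
  sigma_proximity B2 mu m
    (fun x y => row mu d x + row mu d y - d x y - total mu d + m).
Proof.
  destruct HB1 as [L1 C1]. destruct Hmu as [Mlin [Mc Mmono]].
  destruct HB2 as [L2 [C2 [Hl [Hr Hsec]]]].
  destruct Hd as [H0 [Hsym Htri]].
  destruct (Hsec d HdB2) as [Hdx [Hrow Hdiag]].
  set (r := row mu d). set (D := total mu d).
  assert (Hdxx : forall x, d x x = 0) by (intro x; apply H0; reflexivity).
  assert (Hpos : forall x y, 0 <= d x y) by (intros x y; pose proof (Htri x y y); rewrite Hdxx in *; lra).
  split; [|split; [|split]].
  - assert (E1 : B2 (fun x y => 1 * r x + 1 * r y)).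
    { apply L2; [apply Hl | apply Hr]; exact Hrow. }
    assert (E2 : B2 (fun x y => 1 * (1 * r x + 1 * r y) + (-1) * d x y)).
    { apply L2; assumption. }
    assert (E3 : B2 (fun x y => 1 * (1 * (1 * r x + 1 * r y) + (-1) * d x y) + 1 * (m - D))).
    { apply (L2 _ (fun _ _ => m - D)); auto. }
    replace (fun x y => r x + r y - d x y - D + m)
      with (fun x y => 1 * (1 * (1 * r x + 1 * r y) + (-1) * d x y) + 1 * (m - D)); auto.
    apply functional_extensionality; intro x; apply functional_extensionality; intro y; ring.
  - intro x. unfold row at 1.
    assert (Bc : B1 (fun y => 1 * r y + (-1) * d x y)) by (apply L1; auto).
    replace (fun y => r x + r y - d x y - D + m)
      with (fun y => 1 * (1 * r y + (-1) * d x y) + 1 * (fun _ => r x - D + m) y).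
    + rewrite Mlin; auto. rewrite Mlin; auto. rewrite Mc.
      change (mu (fun y => d x y)) with (r x).
      unfold D, total. fold r. change (mu (d x)) with (r x). ring.
    + apply functional_extensionality; intro y; simpl; ring.
  - intros x y z. simpl. rewrite Hdxx. pose proof (Htri x y z).
    rewrite (Hsym y z) in *. lra.
  - intros x y Hxy. rewrite Hdxx, Hdxx.
    assert (d x y <> 0) by (intro Hc; apply Hxy; apply H0; exact Hc).
    pose proof (Hpos x y). lra.
Qed.
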